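(* Let $N\in\mathbb{N}$ be composite and $p$ a prime factor of $N$ with $p\le b$ for some $b\le N/5$. Let $r,m\in\mathbb{N}$ with $2\le m<p$, $\gcd(N,m)=1$ and $r=p\bmod m$, and put $d=\lceil (b/m)^{1/2}\rceil$. Then the sets \[\{m^{-1}r-n\bmod N:1\le n\le d\}\quad\text{and}\quad\{-dn\bmod N:1\le n\le d\}\] (with $m^{-1}$ the inverse of $m$ modulo $N$) are disjoint subsets of $\{0,\dots,N-1\}$, and there exist $i,j\in\{1,\dots,d\}$ such that $m^{-1}r-j\equiv -di\pmod p$; that is, they form a solution to the Covering Problem for $N$ and $d$.
   Context: Covering Problem: for $N$ and $d$, a solution is a pair of disjoint subsets $\{b_n:1\le n\le d\}$ and $\{s_n:1\le n\le d\}$ of $\{0,\dots,N-1\}$ such that, if $N$ is composite, there exist $i,j\in\{1,\dots,d\}$ and a prime factor $p$ of $N$ with $b_i\equiv s_j\pmod p$. *)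

(* Defs.v *)
From mathcomp Require Import all_boot all_order all_algebra.
From mathcomp Require Import reals Rstruct.
From Stdlib Require Rdefinitions.
Set Implicit Arguments. Unset Strict Implicit. Unset Printing Implicit Defensive.
Import Order.TTheory GRing.Theory Num.Theory.

Definition ceil_sqrt_ratio (b m : nat) : nat :=
  `| Num.ceil (Num.sqrt ((b%:R / m%:R)%R : Rdefinitions.R)) |%N.

(* Main.v *)
Require Import Defs.
From mathcomp Require Import all_boot all_order all_algebra.
From mathcomp Require Import reals Rstruct.
From Stdlib Require Rdefinitions.
From mathcomp Require Import ring lra zify.
Import Order.TTheory GRing.Theory Num.Theory.
Local Open Scope ring_scope.

Lemma dprop (b m : nat) : (0 < m)%N -> (0 < b)%N ->
  (b <= m * (ceil_sqrt_ratio b m) ^ 2)%N /\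
  (m * (ceil_sqrt_ratio b m - 1) ^ 2 < b)%N.
Proof.
move=> m0 b0.
rewrite /ceil_sqrt_ratio.
set x : Rdefinitions.R := (b%:R / m%:R)%R.
have mR : (0 < m%:R :> Rdefinitions.R)%R by rewrite ltr0n.
have x0 : (0 <= x)%R by rewrite /x divr_ge0 // ltW.
set s := Num.sqrt x.
have s0 : (0 <= s)%R by rewrite sqrtr_ge0.
have ss : (s ^+ 2 = x)%R by rewrite sqr_sqrtr.
set c := Num.ceil s.
have c0 : (0 <= c)%R by rewrite ceil_ge0 (lt_le_trans _ s0) // ltrN10.
set d := `|c|%N.
have dc : c = d%:Z by rewrite /d abszE ger0_norm.
have hx : (x * m%:R = b%:R)%R by rewrite /x mulfVK // gt_eqF.
have h1 := ceil_ge s. have h2 := ceilB1_lt s.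
rewrite -/c dc in h1 h2.
split.
  rewrite -(ler_nat Rdefinitions.R) natrM natrX.
  rewrite -hx mulrC; apply: ler_pM => //.
  by rewrite -ss; apply: lerXn2r => //; rewrite nnegrE ler0n.
case: d dc h1 h2 => [|e] _ h1 h2; first by rewrite muln0.
rewrite -(ltr_nat Rdefinitions.R) natrM natrX subn1 /=.
rewrite -hx [X in _ < X]mulrC ltr_pM2l //.
rewrite -ss; rewrite ltrXn2r // ?nnegrE ?ler0n //.
move: h2; rewrite -addn1 PoszD addrK.
by [].
Qed.
Local Close Scope ring_scope.

Lemma aux1 (d a b : nat) : b < d -> d * (a + 1) = (d - b) + (a * d + b).
Proof. move=> h; nia. Qed.

Lemma aux2 (r m j q : nat) :
  (r%:Z - m%:Z * j%:Z + m%:Z * (j + q)%N%:Z = (q * m + r)%N%:Z)%R.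
Proof. lia. Qed.

Theorem corollary4p4 (N p b r m : nat) (minv : int) :
  1 < N -> ~~ prime N ->
  prime p -> p %| N -> p <= b -> 5 * b <= N ->
  2 <= m -> m < p -> coprime N m -> r = p %% m ->
  ((m%:Z * minv)%R == 1 %[mod N%:Z])%Z ->
  let d := ceil_sqrt_ratio b m in
  (forall n1 n2 : nat, 1 <= n1 <= d -> 1 <= n2 <= d ->
     (((minv * r%:Z - n1%:Z) %% N%:Z)%Z != ((- (d%:Z * n2%:Z)) %% N%:Z)%Z)%R)
  /\ (exists i j : nat, [/\ 1 <= i <= d, 1 <= j <= d &
       ((minv * r%:Z - j%:Z)%R == (- (d%:Z * i%:Z))%R %[mod p%:Z])%Z]).
Proof.
move=> N1 _ pp pN pb bN m2 mp _ rE hm d.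
have p2 := prime_gt1 pp.
have [hd1 hd2] := @dprop b m (ltnW m2) (leq_trans (ltnW p2) pb).
rewrite -/d in hd1 hd2.
have [k1 Ek1] : exists k1 : int, (m%:Z * minv - 1 = k1 * N%:Z)%R.
  by apply/dvdzP; rewrite -eqz_mod_dvd.
have pE : p = (p %/ m) * m + r by rewrite rE -divn_eq.
set q := p %/ m in pE.
have rm : (r < m)%N by rewrite rE ltn_mod (leq_trans _ m2).
have r0 : (0 < r)%N.
  rewrite lt0n; apply/negP => /eqP r0.
  have : (m %| p)%N by apply/dvdnP; exists q; rewrite pE r0 addn0.
  move/primeP: pp => [_ H] /H.
  by case/orP => /eqP E; [move: m2 | move: mp]; rewrite E // ltnn.
have d0 : (0 < d)%N.
  rewrite lt0n; apply/negP => /eqP d0.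
  by have := leq_trans (leq_trans (ltnW p2) pb) hd1; rewrite d0 muln0.
split.
  move=> n1 n2 /andP[n11 n1d] /andP[n21 n2d]; apply/negP => /eqP E.
  have [k2 Ek2] : exists k2 : int,
     ((minv * r%:Z - n1%:Z) - (- (d%:Z * n2%:Z)) = k2 * N%:Z)%R.
    by apply/dvdzP; rewrite -eqz_mod_dvd; apply/eqP.
  have key : (r%:Z - m%:Z * n1%:Z + m%:Z * d%:Z * n2%:Z =
              (m%:Z * k2 - r%:Z * k1) * N%:Z)%R.
    have -> : (r%:Z - m%:Z * n1%:Z + m%:Z * d%:Z * n2%:Z =
       m%:Z * ((minv * r%:Z - n1%:Z) - (- (d%:Z * n2%:Z))) - r%:Z * (m%:Z * minv - 1))%R by ring.
    rewrite Ek1 Ek2; ring.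
  have b1 : (m * d * n2 <= m * (d * d))%N by rewrite mulnA leq_mul2l n2d orbT.
  have b5 : (m <= m * n1)%N by rewrite leq_pmulr.
  have b2 : (m * n1 <= m * d)%N by rewrite leq_mul2l n1d orbT.
  have b3 : (m * d <= m * d * n2)%N by rewrite -{1}(muln1 (m * d)) leq_mul2l n21 orbT.
  have b4 : (m * (d * d) < 4 * b)%N.
    have : (m * (d-1) * (d-1) < b)%N by rewrite -mulnA mulnn.
    have : (m * (d-1) <= m * (d-1) * (d-1))%N.
      by case: (d - 1) => [|e]; [rewrite !muln0 | rewrite leq_pmulr].
    have -> : (m * (d * d) = m * (d-1) * (d-1) + 2 * (m * (d-1)) + m)%N.
      by case: (d) d0 => // e _; rewrite subn1 /=; ring.
    have mb : (m < b)%N := leq_trans mp pb.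
    move: mb; generalize (m * (d - 1) * (d - 1)) (m * (d - 1)).
    clear; move=> A B; lia.
  set v := (r + m * d * n2 - m * n1)%N.
  have v0 : (0 < v < N)%N.
    rewrite /v; move: r0 rm b1 b2 b3 b4 b5 bN.
    generalize (m * d * n2) (m * n1) (m * d) (m * (d * d)).
    clear; move=> X Y Z W; lia.
  have vE : (v%:Z = r%:Z - m%:Z * n1%:Z + m%:Z * d%:Z * n2%:Z)%R.
    rewrite /v -subzn; last exact: leq_trans b2 (leq_trans b3 (leq_addl _ _)).
    by rewrite PoszD !PoszM; ring.
  have : (N %| v)%N.
    have : (N%:Z %| v%:Z)%Z by rewrite vE key dvdz_mull.
    by rewrite dvdzE.
  case/andP: v0 => v0 vN; move/dvdn_leq => /(_ v0); by rewrite leqNgt vN.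
pose i := q %/ d + 1.
pose j := d - q %% d.
have qd : (q < d * d)%N.
  have h : (q * m < p)%N by rewrite {1}pE -{1}(addn0 (q * m)) ltn_add2l.
  rewrite -(ltn_pmul2r (ltnW m2)) [X in (_ < X)%N]mulnC mulnn.
  exact: leq_trans h (leq_trans pb hd1).
have i1 : (1 <= i <= d)%N by rewrite /i; apply/andP; split; [rewrite addn1 | rewrite addn1 ltn_divLR].
have qmd : (q %% d < d)%N by rewrite ltn_mod.
have j1 : (1 <= j <= d)%N by rewrite /j subn_gt0 qmd leq_subr.
have ijq : (d * i = j + q)%N.
  by rewrite /i /j {3}(divn_eq q d); apply: aux1.
exists i, j; split => //.
rewrite eqz_mod_dvd; apply/dvdzP.
case/dvdnP: pN => t Nt.
set X := ((minv * r%:Z - j%:Z) - (- (d%:Z * i%:Z)))%R.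
have F : (r%:Z - m%:Z * j%:Z + m%:Z * d%:Z * i%:Z = p%:Z)%R.
  by rewrite pE -mulrA -[(d%:Z * i%:Z)%R]PoszM ijq; apply: aux2.
exists (minv * (k1 * t%:Z * r%:Z + 1) - k1 * t%:Z * X)%R.
have E1 : X = (minv * (m%:Z * X) - X * (m%:Z * minv - 1))%R by rewrite /X; ring.
rewrite {1}E1.
have -> : (m%:Z * X = (m%:Z * minv - 1) * r%:Z +
   (r%:Z - m%:Z * j%:Z + m%:Z * d%:Z * i%:Z))%R by rewrite /X; ring.
rewrite F Ek1 Nt PoszM; ring.
Qed.
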